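(* Let $s\in\mathscr S_+^\circ$ with $\operatorname{supp}(s)=\{d_1>\cdots>d_m\}$, and let $s'\in\mathscr S_+$ satisfy $\operatorname{supp}(s')\subsetneq\operatorname{supp}(s)$ and $\operatorname{supp}(s)\setminus\operatorname{supp}(s')\subseteq\{d_{2i}: 1\le 2i\le m\}$. Then $s'\notin\mathscr S_+^\circ$ and $\lfloor s'\rfloor=s$. In particular $s\prec s'$ and $\mathfrak d(s')=\mathfrak d(s)$.
   Context: $\omega=\{0,1,\dots\}$, $[m]=\{1,\dots,m\}$. A finite sign sequence is $s\in\{-,0,+\}^\omega$ with finitely many nonzero entries; $\mathscr S$ their set; $\operatorname{supp}(s)=\{i:s_i\ne0\}$; $\mathscr S_+=\mathscr S\cap\{0,+\}^\omega$. $\mathrm{SC}(t)$ = number of pairs $i<j$ with $\{t_i,t_j\}=\{-,+\}$ and $t_k=0$ for $i<k<j$. $\mathfrak d(s)=\max\{\mathrm{SC}(t):t\in\mathscr S,\ t_i\in\{-,0,s_i\}\ \forall i\}$. $\mathscr S_+^\circ=\{s\in\mathscr S_+:\mathfrak d(s)=\#\operatorname{supp}(s)\}$. Interval decomposition of $s\in\mathscr S_+$: $\operatorname{supp}(s)=X_0\amalg\cdots\amalg X_k$ into intervals with $0\in X_0$ if $0\in\operatorname{supp}(s)$ else $X_0=\emptyset$, $X_i\neq\emptyset$ for $i\in[k]$, $\min X_i-\max X_{i-1}\ge2$ ($\max\emptyset=-\infty$). $\lfloor X_i\rfloor=\{\min X_i-1\}\amalg X_i$ if $\#X_i$ odd,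 else $X_i$; $\lceil X_i\rceil=X_i\amalg\{\max X_i+1\}$ if $\#X_i$ odd, else $X_i$; $\operatorname{supp}(\lfloor s\rfloor)=X_0\amalg\lfloor X_1\rfloor\amalg\cdots\amalg\lfloor X_k\rfloor$, $\operatorname{supp}(\lceil s\rceil)=X_0\amalg\lceil X_1\rceil\amalg\cdots\amalg\lceil X_k\rceil$. On $\mathscr S_+^\circ$: $s\preceq_0 s'$ iff, writing supports in decreasing order $\{d_1>\cdots>d_m\}$, $\{d'_1>\cdots>d'_{m'}\}$, $m\le m'$ and $d_i\le d'_i$ for $i\in[m]$. On $\mathscr S_+$: $s\preceq s'$ iff $s=s'$, or $s\ne s'$ and $\lceil s\rceil\preceq_0\lfloor s'\rfloor$; $s\prec s'$ means $s\preceq s'$, $s\neq s'$. *)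

(* Defs.v *)
From mathcomp Require Import all_boot all_order finmap.
From Stdlib Require Import ClassicalEpsilon.
Set Implicit Arguments. Unset Strict Implicit. Unset Printing Implicit Defensive.
Local Open Scope fset_scope.

Inductive sgn := Neg | Zer | Pos.

Definition isZ (a : sgn) : bool := if a is Zer then true else false.
Definition opp_nz (a b : sgn) : bool :=
  match a, b with Neg, Pos | Pos, Neg => true | _, _ => false end.

(* A finite sign sequence t in S is represented by a list; t_i := nth Zer t i
   (all entries beyond the list are 0). *)
Definition tnth0 (t : seq sgn) (i : nat) : sgn := nth Zer t i.

(* SC(t): number of pairs i<j with {t_i,t_j} = {-,+} and t_k = 0 for i<k<j.
   (Pairs involving positions beyond size t never count, since t_j = 0 there.) *)
Definition SC (t : seq sgn) : nat :=
  \sum_(0 <= i < size t) \sum_(i.+1 <= j < size t)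
     (opp_nz (tnth0 t i) (tnth0 t j)
      && all (fun k => isZ (tnth0 t k)) (iota i.+1 (j - i.+1))).

(* An element s of S_+ is represented by its support supp(s), a finite set of
   naturals (s_i = + iff i \in X, else s_i = 0). *)
Definition sval (X : {fset nat}) (i : nat) : sgn := if i \in X then Pos else Zer.

Definition admissible (X : {fset nat}) (t : seq sgn) : Prop :=
  forall i, tnth0 t i = Neg \/ tnth0 t i = Zer \/ tnth0 t i = sval X i.

Definition is_dmax (X : {fset nat}) (n : nat) : Prop :=
  (exists t, admissible X t /\ SC t = n) /\
  (forall t, admissible X t -> SC t <= n).

(* frak d (s) := the maximum (chosen by classical description; the maximum
   exists and is unique) *)
Definition dd (X : {fset nat}) : nat := epsilon (inhabits 0%N) (is_dmax X).

Definition inSo (X : {fset nat}) : Prop := dd X = #|` X|.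

(* support in decreasing order d_1 > ... > d_m ; d_k = nth 0 (dseq X) k.-1 *)
Definition dseq (X : {fset nat}) : seq nat := sort geq (enum_fset X).

Definition maxS (X : {fset nat}) : nat := \max_(i <- enum_fset X) i.

(* [a,b] is one of the intervals X_i of the interval decomposition of X
   (a maximal interval of consecutive elements of X) *)
Definition is_comp (X : {fset nat}) (a b : nat) : bool :=
  [&& a <= b, all (fun k => k \in X) (iota a (b.+1 - a)),
      (a == 0) || (a.-1 \notin X) & b.+1 \notin X].

(* a is the minimum of an interval X_i with i >= 1 (i.e. not containing 0)
   of odd cardinality *)
Definition odd_comp_min (X : {fset nat}) (a : nat) : bool :=
  (0 < a) && has (fun b => is_comp X a b && odd (b.+1 - a)) (iota a (maxS X).+1).

(* b is the maximum of an interval X_i with i >= 1 of odd cardinality *)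
Definition odd_comp_max (X : {fset nat}) (b : nat) : bool :=
  has (fun a => [&& 0 < a, is_comp X a b & odd (b.+1 - a)]) (iota 0 b.+1).

Definition floorS (X : {fset nat}) : {fset nat} :=
  X `|` [fset a.-1 | a in X & odd_comp_min X a].
Definition ceilS (X : {fset nat}) : {fset nat} :=
  X `|` [fset b.+1 | b in X & odd_comp_max X b].

Definition le0 (X Y : {fset nat}) : bool :=
  (size (dseq X) <= size (dseq Y)) &&
  all (fun i => nth 0 (dseq X) i <= nth 0 (dseq Y) i) (iota 0 (size (dseq X))).

Definition preceq (X Y : {fset nat}) : Prop := X = Y \/ (X <> Y /\ le0 (ceilS X) (floorS Y)).
Definition prec (X Y : {fset nat}) : Prop := preceq X Y /\ X <> Y.

(* Main.v *)
Require Import Defs.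
From mathcomp Require Import all_boot all_order finmap.
Local Open Scope fset_scope.
From Stdlib Require Import ClassicalEpsilon Classical Lia.
From mathcomp Require Import zify.
Import Defs.

Lemma max_exists (P : nat -> Prop) B :
  P 0 -> (forall n, P n -> n <= B) -> exists n, P n /\ forall m, P m -> m <= n.
Proof.
elim: B P => [|B IH] P P0 hb.
  by exists 0; split => // m /hb.
case: (classic (P B.+1)) => HB.
  by exists B.+1; split.
apply: IH => // n Pn; have := hb _ Pn; rewrite leq_eqVlt => /orP[/eqP E|//].
by subst n.
Qed.

Lemma inner_le1 (t : seq sgn) i b :
  \sum_(i.+1 <= j < b)
     (opp_nz (tnth0 t i) (tnth0 t j)
      && all (fun k => isZ (tnth0 t k)) (iota i.+1 (j - i.+1))) <= 1.
Proof.
elim: b => [|b IH]; first by rewrite big_geq.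
case: (leqP i.+1 b) => hb; last by rewrite big_geq.
rewrite big_nat_recr //=.
case E: (opp_nz _ _ && _); last by rewrite addn0.
rewrite big1_seq ?add0n // => j; rewrite mem_index_iota => /andP[h1 h2].
move/andP: E => [_ /allP A].
have : j \in iota i.+1 (b - i.+1) by rewrite mem_iota subnKC // h1 h2.
move/A; case: (tnth0 t j) => //; by case: (tnth0 t i).
Qed.

Definition isP (a : sgn) : bool := if a is Pos then true else false.

Lemma sum_bool_le (P : nat -> bool) m n : \sum_(m <= i < n) (P i : nat) <= n - m.
Proof.
apply: leq_trans (_ : \sum_(m <= i < n) 1 <= _).
  by apply: leq_sum => i _; apply: leq_b1.
by rewrite sum_nat_const_nat ?mul1n ?muln1.
Qed.

Lemma SC_bound X t : admissible X t -> SC t <= (maxS X).+1.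
Proof.
move=> ad.
have Hz : forall i, maxS X < i -> ~~ isP (tnth0 t i).
  move=> i hi; case: (ad i) => [->|[->|->]] //.
  rewrite /sval; case: ifP => // iX.
  have : i <= maxS X.
    by rewrite /maxS; apply: (@leq_bigmax_seq _ (enum_fset X) xpredT id i).
  by rewrite leqNgt hi.
rewrite /SC.
have H : forall i, \sum_(i.+1 <= j < size t)
     (opp_nz (tnth0 t i) (tnth0 t j)
      && all (fun k => isZ (tnth0 t k)) (iota i.+1 (j - i.+1))) <= (i <= maxS X).
  move=> i; case: (leqP i (maxS X)) => hi; first exact: inner_le1.
  rewrite big1_seq // => j /andP[_]; rewrite mem_index_iota => /andP[h1 _].
  have := Hz _ hi; have := Hz j (ltn_trans hi h1).
  by case: (tnth0 t j); case: (tnth0 t i).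
apply: leq_trans; first by apply: leq_sum => i _; apply: H.
case: (leqP (size t) (maxS X).+1) => hs.
  apply: leq_trans (sum_bool_le _ _ _) _; by rewrite subn0.
rewrite (big_cat_nat (n := (maxS X).+1)) //= ?(ltnW hs) //.
have -> : \sum_((maxS X).+1 <= i < size t) (i <= maxS X) = 0.
  by rewrite big1_seq // => i /andP[_]; rewrite mem_index_iota => /andP[h _]; rewrite leqNgt h.
rewrite addn0.
apply: leq_trans (sum_bool_le _ _ _) _; by rewrite subn0.
Qed.

Lemma dd_spec X : is_dmax X (dd X).
Proof.
rewrite /dd; apply: epsilon_spec.
have P0 : exists t, admissible X t /\ SC t = 0.
  exists [::]; split; last by rewrite /SC big_geq. by move=> i; right; left; exact: nth_nil.
have Pb : forall n, (exists t, admissible X t /\ SC t = n) -> n <= (maxS X).+1.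
  by move=> n [t [a <-]]; apply: SC_bound.
have [n [[t [ht <-]] hm]] := @max_exists (fun n => exists t, admissible X t /\ SC t = n) _ P0 Pb.
exists (SC t); split; first by exists t.
by move=> t' a'; apply: hm; exists t'.
Qed.

Lemma SC_lower t :
  \sum_(0 <= i < size t) opp_nz (tnth0 t i) (tnth0 t i.+1) <= SC t.
Proof.
apply: leq_sum => i _.
case: (ltnP i.+1 (size t)) => hi.
  by rewrite big_ltn // subnn /= andbT leq_addr.
by rewrite /tnth0 [nth Zer t i.+1]nth_default //; case: (nth Zer t i).
Qed.

Lemma sum_count (a : pred nat) r : \sum_(i <- r) (a i : nat) = count a r.
Proof.
rewrite -sum1_count [RHS]big_mkcond; apply: eq_bigr => i _; by case: (a i).
Qed.

Lemma sum_mem ps L : uniq ps -> all (fun x => x < L) ps ->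
  \sum_(0 <= i < L) (i \in ps : nat) = size ps.
Proof.
move=> u /allP a.
rewrite (sum_count (mem ps)) -size_filter.
apply: perm_size; apply: uniq_perm; rewrite ?filter_uniq ?iota_uniq //.
move=> x; rewrite mem_filter mem_iota add0n /=.
by rewrite subn0; case E: (x \in ps) => //=; rewrite (a _ E).
Qed.

Lemma hdec (h : nat -> nat) n :
  (forall i, i.+1 < n -> (h i.+1).+1 < h i) ->
  forall i j, i < j < n -> (h j).+1 < h i.
Proof.
move=> H i j /andP[ij jn].
elim: j ij jn => // j IH; rewrite ltnS leq_eqVlt => /orP[/eqP <- | ij] jn.
  exact: H.
apply: ltn_trans (H j jn) _; apply: ltn_trans (IH ij (ltnW jn)).
by [].
Qed.

Lemma witness (X : {fset nat}) (h : nat -> nat) n :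
  (forall i, i.+1 < n -> (h i.+1).+1 < h i) ->
  (forall i, i < n -> h i \in X) ->
  exists t, admissible X t /\ 2 * n <= SC t + (h n.-1 == 0).
Proof.
move=> H hX.
have D := @hdec h n H.
pose ps := map h (iota 0 n).
have psP : forall x, reflect (exists2 j, j < n & x = h j) (x \in ps).
  move=> x; apply: (iffP mapP) => [[j]|[j jn ->]].
    by rewrite mem_iota add0n => /andP[_ jn] ->; exists j.
  by exists j; rewrite // mem_iota add0n jn.
have le0 : forall x, x \in ps -> x <= h 0.
  move=> x /psP [j jn ->]; case: j jn => // j jn.
  by apply: ltnW; apply: ltnW; apply: D; rewrite jn.
have nadj : forall x, x \in ps -> x.+1 \notin ps.
  move=> x /psP [j jn ->]; apply/psP => [[j' j'n E]].
  case: (ltngtP j j') => c.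
  - have := D _ _ (introT andP (conj c j'n)); rewrite -E ltnNge => /negP; apply.
    by apply: leqW.
  - have := D _ _ (introT andP (conj c jn)); rewrite -E ltnn //.
  - rewrite c in E; lia.
have u : uniq ps.
  rewrite map_inj_in_uniq ?iota_uniq // => i j; rewrite !mem_iota !add0n /= => hi hj E.
  case: (ltngtP i j) => // c.
  - by have := D _ _ (introT andP (conj c hj)); rewrite E ltnNge leqnSn.
  - by have := D _ _ (introT andP (conj c hi)); rewrite E ltnNge leqnSn.
have z : (0 \in ps) <= (h n.-1 == 0).
  case E: (0 \in ps) => //; move/psP: E => [j jn E].
  have n0 : 0 < n := leq_ltn_trans (leq0n j) jn.
  case: (ltnP j n.-1) => c.
    have := D j n.-1; rewrite c /= prednK ?leqnn //.
    by move=> /(_ isT); rewrite -E.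
  have -> : n.-1 = j by apply/eqP; rewrite eqn_leq c -ltnS prednK.
  by rewrite -E.
pose L := (h 0).+2.
pose t := mkseq (fun i => if i \in ps then Pos else Neg) L.
have tE : forall i, i < L -> tnth0 t i = if i \in ps then Pos else Neg.
  by move=> i iL; rewrite /tnth0 nth_mkseq.
exists t; split.
  move=> i; case: (ltnP i L) => iL.
    rewrite tE //; case E: (i \in ps); last by left.
    right; right; rewrite /sval; move/psP: E => [j jn ->]; by rewrite hX.
  by right; left; rewrite /tnth0 nth_default // size_mkseq.
have sz : size t = L by rewrite size_mkseq.
apply: leq_trans (leq_add (SC_lower t) (leqnn _)).
apply: (@leq_trans (\sum_(0 <= i < L) ((i \in ps : nat) + (i.+1 \in ps)) + (0 \in ps))); last first.
  apply: leq_add => //; rewrite sz big_nat_cond [Q in _ <= Q]big_nat_cond.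
  apply: leq_sum => i /andP[/andP[_ iL] _].
  rewrite tE //; case E: (i \in ps).
    rewrite tE; last by rewrite /L !ltnS le0.
    by rewrite (negbTE (nadj _ E)).
  case E2: (i.+1 \in ps) => //.
  rewrite tE ?E2 //; rewrite /L !ltnS; apply: ltnW; apply: le0; by rewrite E2.
rewrite big_split /= -addnA.
have all1 : all (fun x => x < L) ps by apply/allP => x /le0 h0; rewrite /L ltnS leqW.
have all2 : all (fun x => x < L.+1) ps by apply/allP => x /le0 h0; rewrite /L !ltnS leqW // leqW.
rewrite (sum_mem _ _ u all1).
have -> : (\sum_(0 <= i < L) (i.+1 \in ps : nat) + (0 \in ps))%N = \sum_(0 <= i < L.+1) (i \in ps : nat).
  by rewrite big_nat_recl // addnC.
rewrite (sum_mem _ _ u all2) size_map size_iota.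
by rewrite mul2n -addnn.
Qed.

Set Implicit Arguments. Unset Strict Implicit.

Lemma mem_ds (X : {fset nat}) x : (x \in dseq X) = (x \in X).
Proof. by rewrite /dseq mem_sort. Qed.

Lemma uniq_ds (X : {fset nat}) : uniq (dseq X).
Proof. by rewrite /dseq sort_uniq fset_uniq. Qed.

Lemma size_ds (X : {fset nat}) : size (dseq X) = #|` X|.
Proof. by rewrite /dseq size_sort. Qed.

Lemma ds_dec (X : {fset nat}) i j : i < j -> j < size (dseq X) ->
  nth 0 (dseq X) j < nth 0 (dseq X) i.
Proof.
move=> ij jm.
have so : sorted geq (dseq X) by apply: sort_sorted => x y; apply: leq_total.
have le : nth 0 (dseq X) j <= nth 0 (dseq X) i.
  have tr : transitive geq by move=> a b c /= h1 h2; apply: leq_trans h2 h1.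
  have rf : reflexive geq by move=> a /=.
  apply: (@sorted_leq_nth nat geq tr rf 0 (dseq X) so i j) (ltnW ij).
  - by rewrite inE (ltn_trans ij jm).
  - by rewrite inE.
rewrite ltn_neqAle le andbT; apply/negP => /eqP E.
move/eqP: E; rewrite nth_uniq ?uniq_ds ?(ltn_trans ij jm) //.
by move/eqP => E; rewrite E ltnn in ij.
Qed.

Lemma ds_dec2 (X : {fset nat}) i j : i.+1 < j -> j < size (dseq X) ->
  (nth 0 (dseq X) j).+1 < nth 0 (dseq X) i.
Proof.
move=> ij jm; have h1 := ds_dec ij jm.
have h2 := @ds_dec X i i.+1 (ltnSn i) (ltn_trans ij jm).
apply: leq_ltn_trans h2; exact: h1.
Qed.

Lemma nth_ds_mem (X : {fset nat}) i : i < size (dseq X) -> nth 0 (dseq X) i \in X.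
Proof. by move=> h; rewrite -mem_ds mem_nth. Qed.

Lemma idx_lt (X : {fset nat}) x : x \in X -> index x (dseq X) < size (dseq X).
Proof. by move=> h; rewrite index_mem mem_ds. Qed.

Lemma nth_idx (X : {fset nat}) x : x \in X -> nth 0 (dseq X) (index x (dseq X)) = x.
Proof. by move=> h; rewrite nth_index // mem_ds. Qed.

Lemma idx_nth (X : {fset nat}) i : i < size (dseq X) -> index (nth 0 (dseq X) i) (dseq X) = i.
Proof. by move=> h; rewrite index_uniq // uniq_ds. Qed.

Lemma step (X : {fset nat}) x : x \in X -> x.+1 \in X ->
  index x (dseq X) = (index x.+1 (dseq X)).+1.
Proof.
move=> hx hx1.
set a := index x.+1 (dseq X); set b := index x (dseq X).
have ha := idx_lt hx1; have hb := idx_lt hx.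
have na : nth 0 (dseq X) a = x.+1 by apply: nth_idx.
have nb : nth 0 (dseq X) b = x by apply: nth_idx.
have ab : a < b.
  rewrite ltnNge; apply/negP => ba.
  case: (ltngtP b a) ba => // c _.
    by have := ds_dec c ha; rewrite na nb ltnNge leqnSn.
  by move: na; rewrite -c nb; lia.
case: (ltngtP a.+1 b) ab => // c _.
have h1 := ds_dec c hb; have h2 := @ds_dec X a a.+1 (ltnSn a) (ltn_trans c hb).
rewrite na nb in h1 h2; lia.
Qed.

Lemma run (X : {fset nat}) x L : (forall l, l <= L -> (x + l)%N \in X) ->
  index x (dseq X) = (index (x + L)%N (dseq X) + L)%N.
Proof.
elim: L => [|L IH] H; first by rewrite addn0 addn0.
rewrite IH; last by move=> l hl; apply: H; apply: leqW.
rewrite (step (H L (leqnSn L))); first by rewrite addnS addSn addnS.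
by rewrite -addnS; apply: H.
Qed.

Lemma ub (X : {fset nat}) t : inSo X -> admissible X t -> SC t <= size (dseq X).
Proof. by move=> hI ad; rewrite size_ds -hI; apply: (dd_spec X).2. Qed.

Lemma parity m : exists k, m = (2 * k + odd m)%N.
Proof. by exists m./2; rewrite -[m in LHS]odd_double_half addnC mul2n. Qed.

Lemma nth_pos (X : {fset nat}) i : i.+1 < size (dseq X) -> 0 < nth 0 (dseq X) i.
Proof. by move=> h; apply: leq_ltn_trans (ds_dec (ltnSn i) h). Qed.

Lemma SB_of (X : {fset nat}) : inSo X -> odd (size (dseq X)) ->
  nth 0 (dseq X) (size (dseq X)).-1 = 0.
Proof.
move=> hI ho; set m := size (dseq X) in ho *.
have [k Em] := parity m; rewrite ho /= in Em.
case: (nth 0 (dseq X) m.-1 =P 0) => // nz; exfalso.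
have := @witness X (fun i => nth 0 (dseq X) (2 * i)) k.+1.
case.
- by move=> i hi; apply: ds_dec2; lia.
- by move=> i hi; apply: nth_ds_mem; rewrite -/m; lia.
move=> t [ad hs]; have := ub hI ad; rewrite -/m.
have e : 2 * k.+1.-1 = m.-1 by lia.
rewrite e in hs; move/eqP/negbTE: nz hs => -> hs; lia.
Qed.

Lemma SA_of (X : {fset nat}) : inSo X -> forall j, odd j -> j < size (dseq X) ->
  nth 0 (dseq X) j.-1 = (nth 0 (dseq X) j).+1.
Proof.
move=> hI j hj jm; set m := size (dseq X) in jm *.
have [k Ej] := parity j; rewrite hj /= in Ej.
have d := @ds_dec X j.-1 j ltac:(lia) jm.
case: (ltngtP (nth 0 (dseq X) j).+1 (nth 0 (dseq X) j.-1)) => // [G|]; last by lia.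
exfalso.
have [q Em] := parity m.
pose g i := if i <= k then 2 * i else (2 * i).-1.
have := @witness X (fun i => nth 0 (dseq X) (g i)) q.+1.
case.
- move=> i hi; rewrite /g.
  case: (leqP i.+1 k) => c1.
    have -> : i <= k by lia.
    apply: ds_dec2; lia.
  case: (leqP i k) => c2.
    have -> : i = k by lia.
    have -> : (2 * k.+1).-1 = j by lia.
    have -> : 2 * k = j.-1 by lia.
    exact: G.
  apply: ds_dec2; case: (odd m) Em => /= Em; lia.
- move=> i hi; apply: nth_ds_mem; rewrite -/m /g.
  case: (leqP i k) => c; case: (odd m) Em => /= Em; lia.
move=> t [ad hs]; move: (ub hI ad) hs; rewrite -/m /g.
have -> : (q.+1.-1 <= k) = false by apply/negbTE; case: (odd m) Em => /= Em; lia.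
case: (odd m) Em => /= Em.
  have -> : (nth 0 (dseq X) (2 * q.+1.-1).-1 == 0) = false.
    apply/negbTE; rewrite -lt0n; apply: nth_pos; rewrite -/m; lia.
  lia.
case: (_ == 0) => /=; lia.
Qed.

Definition CC (X Y : {fset nat}) :=
  forall x, x \in X -> x \notin Y -> odd (index x (dseq X)).

Lemma top_even (X Y : {fset nat}) b : inSo X -> {subset Y <= X} -> CC X Y ->
  b \in Y -> b.+1 \notin Y -> ~~ odd (index b (dseq X)).
Proof.
move=> hI sub cc bY b1Y; have bX := sub _ bY.
case e : (b.+1 \in X).
  by rewrite (step bX e) /= negbK; apply: cc.
apply/negP => ob.
set j := index b (dseq X) in ob.
have jm : j < size (dseq X) by apply: idx_lt.
have := SA_of hI ob jm; rewrite nth_idx // => E.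
have : j.-1 < size (dseq X) by lia.
move/(nth_ds_mem (X:=X)); rewrite E e //.
Qed.

Lemma bot_odd (X : {fset nat}) a : inSo X -> a \in X -> 0 < a -> a.-1 \notin X ->
  odd (index a (dseq X)).
Proof.
move=> hI aX a0 na; apply/negPn/negP => ej.
set j := index a (dseq X) in ej.
have jm : j < size (dseq X) by apply: idx_lt.
case: (ltnP j.+1 (size (dseq X))) => c.
  have := SA_of hI (j := j.+1) ltac:(by rewrite /= ej) c; rewrite /= nth_idx // => E.
  move: na; rewrite E /=; by rewrite nth_ds_mem.
have ej' : j = (size (dseq X)).-1 by lia.
have om : odd (size (dseq X)).
  have -> : size (dseq X) = j.+1 by lia.
  by rewrite /= ej.
have := SB_of hI om; rewrite -ej' nth_idx //; lia.
Qed.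

Lemma comp_par (X Y : {fset nat}) a b : inSo X -> {subset Y <= X} -> CC X Y ->
  a <= b -> (forall k, a <= k <= b -> k \in Y) -> b.+1 \notin Y ->
  odd (index a (dseq X)) = odd (b - a).
Proof.
move=> hI sub cc ab H b1.
rewrite (@run X a (b - a)); last first.
  by move=> l hl; apply: sub; apply: H; lia.
rewrite subnKC // oddD.
by rewrite (negbTE (top_even hI sub cc (H b ltac:(lia)) b1)).
Qed.

Unset Implicit Arguments. Set Strict Implicit.

Lemma adm_mono (X Y : {fset nat}) t : {subset Y <= X} -> admissible Y t -> admissible X t.
Proof.
move=> sub ad i; case: (ad i) => [->|[->|->]]; [by left|by right;left|].
rewrite /sval; case: ifP => hi; last by right; left.
by rewrite (sub _ hi); right; right.
Qed.

Arguments adm_mono {X Y t}.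

Lemma le_maxS (X : {fset nat}) x : x \in X -> x <= maxS X.
Proof. by move=> h; rewrite /maxS; apply: (@leq_bigmax_seq _ (enum_fset X) xpredT id x). Qed.

Arguments le_maxS {X x}.

Theorem mainTheorem12 (s s' : {fset nat}) :
  inSo s ->
  s' `<` s ->
  (forall x, x \in s -> x \notin s' ->
     exists i, 1 <= 2 * i <= size (dseq s) /\ x = nth 0 (dseq s) (2 * i).-1) ->
  ~ inSo s' /\ floorS s' = s /\ prec s s' /\ dd s' = dd s.
Proof.
move=> hI pr hC.
have sub : {subset s' <= s}.
  by move: pr; rewrite fproperEneq => /andP[_ /fsubsetP].
have neq : s <> s'.
  by move: pr; rewrite fproperEneq => /andP[/eqP ne _] E; apply: ne.
have cc : CC s s'.
  move=> x xs xn; have [i [hi ->]] := hC x xs xn.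
  rewrite idx_nth; last by lia.
  case: i hi => [|i] hi; first by lia.
  have -> : (2 * i.+1).-1 = (2 * i).+1 by lia.
  by rewrite /= oddM.
set m := size (dseq s).
have msz : #|` s| = m by rewrite /m size_ds.
have dds : dd s = m by rewrite hI msz.
have dds' : dd s' = m.
  have [q Em] := parity m.
  have := @witness s' (fun i => nth 0 (dseq s) (2 * i)) (q + odd m).
  case.
  - by move=> i hi; apply: ds_dec2; rewrite -/m; case: (odd m) Em hi => /= Em hi; lia.
  - move=> i hi; apply/negPn/negP => nin.
    have hl : 2 * i < m by case: (odd m) Em hi => /= Em hi; lia.
    have := cc _ (nth_ds_mem hl) nin; rewrite idx_nth // oddM //.
  move=> t [ad hs].
  have tm : SC t <= m := ub hI (adm_mono sub ad).
  have mt : m <= SC t.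
    move: hs; case: (odd m) Em => /= Em hs; first by lia.
    case: q Em hs => [|q] Em hs; first by lia.
    move: hs; have -> : (nth 0 (dseq s) (2 * (q.+1 + 0).-1) == 0) = false.
      by apply/negbTE; rewrite -lt0n; apply: nth_pos; rewrite -/m; lia.
    lia.
  have [[t0 [ad0 e0]] b0] := dd_spec s'.
  have := ub hI (adm_mono sub ad0); rewrite e0 -/m => h1.
  have := b0 t ad; lia.
have fl : floorS s' = s.
  apply/fsetP => x; rewrite in_fsetU; apply/idP/idP.
    case/orP => [xs'|]; first exact: sub.
    move/imfsetP => [a /=]; rewrite inE => /andP[aY ocm] ->.
    move/andP: ocm => [a0 /hasP [b _ /andP[ic ob]]].
    move/and4P: ic => [ab /allP al an bn].
    apply/negPn/negP => na.
    have H : forall k, a <= k <= b -> k \in s'.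
      by move=> k hk; apply: al; rewrite mem_iota; lia.
    have := comp_par hI sub cc ab H bn.
    rewrite (bot_odd hI (sub _ aY) a0 na) => e.
    by move: ob; rewrite subSn // /= -e.
  move=> xs; case xs' : (x \in s') => //=.
  have ox := cc x xs (negbT xs').
  set j := index x (dseq s) in ox.
  have jm : j < m by apply: idx_lt.
  have E := SA_of hI ox jm; rewrite /j nth_idx // -/j in E.
  have x1s : x.+1 \in s by rewrite -E; apply: nth_ds_mem; rewrite -/m; lia.
  have ix1 : index x.+1 (dseq s) = j.-1 by rewrite -E idx_nth //; rewrite -/m; lia.
  have x1s' : x.+1 \in s'.
    apply/negPn/negP => nin; have := cc _ x1s nin; rewrite ix1.
    by case: (j) ox => // j' /= /negP.
  pose P l := forall k, x.+1 <= k <= (x.+1 + l)%N -> k \in s'.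
  have P0 : P 0 by move=> k hk; have -> : k = x.+1 by lia.
  have Pb : forall l, P l -> l <= maxS s'.
    move=> l Pl; have := le_maxS (Pl ((x.+1 + l)%N) ltac:(lia)); lia.
  have [l [Pl lmax]] := @max_exists P (maxS s') P0 Pb.
  set b := (x.+1 + l)%N.
  have bn : b.+1 \notin s'.
    apply/negP => bin.
    have : P l.+1.
      move=> k hk; case: (leqP k b) => c; first by apply: Pl; lia.
      by have -> : k = b.+1 by lia.
    by move/lmax; rewrite ltnn.
  have ab : x.+1 <= b by lia.
  have := comp_par hI sub cc ab Pl bn; rewrite ix1.
  have -> : b - x.+1 = l by lia.
  move=> par.
  apply/imfsetP; exists x.+1 => //=; rewrite inE x1s' /=.
  rewrite /odd_comp_min; apply/andP; split => //; apply/hasP; exists b.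
    rewrite mem_iota; have := Pb _ Pl; lia.
  apply/andP; split.
    apply/and4P; split => //.
      by apply/allP => k; rewrite mem_iota => hk; apply: Pl; lia.
    by rewrite /= xs'.
  have -> : b.+1 - x.+1 = l.+1 by lia.
  by rewrite /= -par; case: (j) ox => // j' /= ->.
have cl : ceilS s = s.
  apply/fsetP => x; rewrite in_fsetU; apply/idP/idP => [|->//].
  case/orP => [//|]; move/imfsetP => [b /=]; rewrite inE => /andP[bs ocm] _.
  move/hasP: ocm => [a _ /and3P[a0 ic ob]].
  move/and4P: ic => [ab /allP al an bn].
  have na : a.-1 \notin s by move: an; rewrite eqn0Ngt a0.
  have H : forall k, a <= k <= b -> k \in s.
    by move=> k hk; apply: al; rewrite mem_iota; lia.
  have cc0 : CC s s by move=> y -> /negP.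
  have := comp_par hI (fun y (h : y \in s) => h) cc0 ab H bn.
  rewrite (bot_odd hI (H a ltac:(lia)) a0 na) => e.
  by move: ob; rewrite subSn // /= -e.
split.
  rewrite /inSo dds' => e; have := fproper_ltn_card pr; rewrite -e msz ltnn //.
split => //.
split; last by rewrite dds dds'.
split => //; right; split => //; rewrite cl fl /le0 leqnn /=.
by apply/allP => i _.
Qed.
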